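(* Let $Z(t),t\in\mathbb{Z}^d$, be a BRs rf with $P(\sup_tZ(t)>0)=1$ and $E[Z(t)]=1$ for all $t$, and let $\Theta$ be defined by $P(\Theta\in A)=E[Z(0)\mathbf 1(Z/Z(0)\in A)]$. If $F:E\to[0,\infty]$ is a shift-invariant and 0-homogeneous measurable map, then $E[F(Z)]=0$ if and only if $E[F(\Theta)]=0$. If in addition $F\le1$, then $E[F(Z)]=1$ if and only if $E[F(\Theta)]=1$.
   Context: $E=[0,\infty)^{\mathbb{Z}^d}$ with product $\sigma$-field; shift $(B^hf)(t)=f(t-h)$; $F$ is 0-homogeneous if $F(cf)=F(f)$ for all $c>0$, and shift-invariant if $F(B^hf)=F(f)$ for all $h$. A non-negative rf $Z$ on $\mathbb{Z}^d$ with finite positive means is Brown–Resnick stationary (BRs) if $E[Z(h)G(Z)]=E[Z(0)G(B^hZ)]$ for all $h\in\mathbb{Z}^d$ and all 0-homogeneous measurable $G:E\to[0,\infty]$; equivalently, it is the spectral rf of a stationary max-stable rf. *)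

(* Defs.v *)
From HB Require Import structures.
From mathcomp Require Import all_boot all_order all_algebra.
From mathcomp Require Import all_classical all_reals all_analysis.
From mathcomp Require Import measurable_realfun.
Unset Printing Implicit Defensive.
Import Order.TTheory GRing.Theory Num.Theory.
Import numFieldNormedType.Exports.
Local Open Scope classical_set_scope.
Local Open Scope ring_scope.

(* Index set Z^d is 'rV[int]_d. Real-valued fields on Z^d, with the product
   sigma-field generated by the coordinate maps f |-> f t (t in Z^d). *)
Definition coord_sets (R : realType) (d : nat) : set (set ('rV[int]_d -> R)) :=
  \bigcup_(t in [set: 'rV[int]_d])
     preimage_set_system [set: 'rV[int]_d -> R] (fun f => f t) (measurable : set (set R)).

Notation RF R d := (g_sigma_algebraType (coord_sets R d)).

Definition Eset (R : realType) (d : nat) : set (RF R d) :=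
  [set f | forall t, 0 <= f t].
Arguments Eset {R d}.

Definition Bsh (R : realType) (d : nat) (h : 'rV[int]_d) (f : RF R d) : RF R d :=
  fun t => f (t - h).
Arguments Bsh {R d}.

(* F : E -> [0,oo] given as a map on RF, only its values on E matter *)
Definition hom0 (R : realType) (d : nat) (F : RF R d -> \bar R) :=
  forall (c : R) (f : RF R d), 0 < c -> Eset f ->
    F ((fun t => c * f t) : RF R d) = F f.
Arguments hom0 {R d}.

Definition shift_inv (R : realType) (d : nat) (F : RF R d -> \bar R) :=
  forall (h : 'rV[int]_d) (f : RF R d), Eset f -> F (Bsh h f) = F f.
Arguments shift_inv {R d}.

Definition nonneg_map (R : realType) (d : nat) (F : RF R d -> \bar R) :=
  forall f, Eset f -> (0 <= F f)%E.
Arguments nonneg_map {R d}.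

Local Open Scope ereal_scope.

Definition BRs (R : realType) (d : nat) (dO : measure_display)
  (Om : measurableType dO) (P : probability Om R) (Z : Om -> RF R d) : Prop :=
  [/\ measurable_fun [set: Om] Z,
      (forall w, Eset (Z w)),
      (forall t, P.-integrable [set: Om] (fun w => (Z w t)%:E)
                 /\ (0 < \int[P]_w (Z w t)%:E)%E) &
      (forall (h : 'rV[int]_d) (G : RF R d -> \bar R),
          measurable_fun (@Eset R d) G -> nonneg_map G -> hom0 G ->
          \int[P]_w ((Z w h)%:E * G (Z w))%E
          = \int[P]_w ((Z w 0)%:E * G (Bsh h (Z w)))%E)].
Arguments BRs {R d dO Om}.

(* Main.v *)
Require Import Defs.
From HB Require Import structures.
From mathcomp Require Import all_boot all_order all_algebra.
From mathcomp Require Import all_classical all_reals all_analysis.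
From mathcomp Require Import measurable_realfun.
From mathcomp Require Import lra.
Import Order.TTheory GRing.Theory Num.Theory.
Import numFieldNormedType.Exports.
Local Open Scope classical_set_scope.
Local Open Scope ring_scope.
Lemma bigcup_pickle (U : countType) (u0 : U) T (A : U -> set T) :
  \bigcup_i A i = \bigcup_n A (odflt u0 (unpickle n)).
Proof.
apply/seteqP; split=> x [i _ Ax].
  by exists (pickle i) => //; rewrite pickleK.
by exists (odflt u0 (unpickle i)).
Qed.

Lemma coord_meas (R : realType) (d : nat) (t : 'rV[int]_d) :
  measurable_fun [set: RF R d] (fun f : RF R d => f t).
Proof.
move=> _ Y mY; apply: sub_gen_smallest.
by exists t => //; exists Y.
Qed.

Lemma Eset_meas (R : realType) (d : nat) : measurable (@Eset R d).
Proof.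
have -> : @Eset R d = ~` \bigcup_n ~` [set f : RF R d | (0 <= f (odflt 0 (unpickle n)))%R].
  rewrite -(@bigcup_pickle _ 0 _ (fun t => ~` [set f : RF R d | (0 <= f t)%R])) setC_bigcup /Eset.
  apply/seteqP; split=> f H /=.
  by move=> t _ /= /(_ (H t)).
  by move=> t; have := H t I => /=; exact: contrapT.
apply: measurableC; apply: bigcupT_measurable => n; apply: measurableC.
have := @coord_meas R d (odflt 0 (unpickle n)) measurableT _ (@measurable_itv R `[0, +oo[).
rewrite setTI; congr measurable; apply/seteqP; split=> f /=; rewrite in_itv /= andbT //.
Qed.
Local Open Scope ereal_scope.

Lemma int0 d (T : measurableType d) (R : realType) (mu : {measure set T -> \bar R})
  (f : T -> \bar R) : measurable_fun [set: T] f -> (forall x, 0 <= f x) ->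
  (\int[mu]_x f x = 0 <-> mu.-negligible [set x | f x != 0]).
Proof.
move=> mf f0.
have -> : \int[mu]_x f x = \int[mu]_x `|f x|.
  by apply: eq_integral => x _; rewrite gee0_abs.
rewrite (ae_eq_integral_abs mu measurableT mf).
have -> : [set x | f x != 0] = ~` [set x | [set: T] x -> f x = cst 0 x].
  apply/seteqP; split=> x /=.
    by move=> /eqP fx0 H; apply: fx0; exact: H.
  by move=> H; apply/eqP => fx0; apply: H.
by [].
Qed.

Lemma negl_bigcup_count d (T : measurableType d) (R : realType)
  (mu : {measure set T -> \bar R}) (U : countType) (u0 : U) (A : U -> set T) :
  (forall i, mu.-negligible (A i)) -> mu.-negligible (\bigcup_i A i).
Proof.
move=> H; rewrite (@bigcup_pickle _ u0); exact: negligible_bigcup.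
Qed.

Lemma comp_E (R : realType) (d : nat) dO (Om : measurableType dO)
  (X : Om -> RF R d) (g : RF R d -> \bar R) :
  measurable_fun [set: Om] X -> (forall w, Eset (X w)) ->
  measurable_fun (@Eset R d) g -> measurable_fun [set: Om] (fun w => g (X w)).
Proof.
move=> mX XE mg _ Y mY.
have := mX measurableT _ (mg (@Eset_meas R d) Y mY).
congr measurable; apply/seteqP; split=> w /=.
  by move=> [_ [_ H]]; split.
by move=> [_ H]; split => //; split => //; exact: XE.
Qed.

Arguments comp_E {R d dO Om X g}.
Arguments int0 {d T R} mu {f}.
Arguments negl_bigcup_count {d T R mu U} u0 {A}.
Arguments coord_meas {R d} t.

Lemma part1 (R : realType) (d : nat)
  (dO : measure_display) (Om : measurableType dO) (P : probability Om R)
  (Z : Om -> RF R d)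
  (dO' : measure_display) (Om' : measurableType dO') (P' : probability Om' R)
  (Theta : Om' -> RF R d) :
  BRs P Z ->
  P [set w | exists t, (0 < Z w t)%R] = 1%E ->
  measurable_fun [set: Om'] Theta ->
  (forall w, Eset (Theta w)) ->
  (forall A : set (RF R d), measurable A ->
     P' (Theta @^-1` A)
     = \int[P]_w ((Z w 0)%:E
                  * (\1_A ((fun t => (Z w t / Z w 0)%R) : RF R d))%:E)%E) ->
  forall F : RF R d -> \bar R,
    measurable_fun (@Eset R d) F -> nonneg_map F -> shift_inv F -> hom0 F ->
    (\int[P]_w F (Z w) = 0%E <-> \int[P']_w F (Theta w) = 0%E).
Proof.
move=> [mZ ZE Zint BR] PS mT TE hT F mF F0 siF hF.
have mE := @Eset_meas R d.
have mFZ := comp_E mZ ZE mF.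
have mFT := comp_E mT TE mF.
have FZ0 w : 0 <= F (Z w) := F0 _ (ZE w).
have FT0 w : 0 <= F (Theta w) := F0 _ (TE w).
have mZr t : measurable_fun [set: Om] (fun w => Z w t) :=
  measurableT_comp (coord_meas t) mZ.
have mZt t : measurable_fun [set: Om] (fun w => (Z w t)%:E).
  exact/measurable_EFinP.
pose A := @Eset R d `&` F @^-1` (~` [set 0]).
have mA : measurable A := mF mE _ (measurableC (emeasurable_set1 0)).
rewrite (int0 P mFZ FZ0) (int0 P' mFT FT0).
transitivity (P.-negligible [set w | (Z w 0)%:E * F (Z w) != 0]).
  split.
    move=> N; apply: negligibleS N => w /=.
    by rewrite mule_eq0 negb_or => /andP[].
  move=> N0.
  have Nh h : P.-negligible [set w | (Z w h)%:E * F (Z w) != 0].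
    apply/int0; [exact: emeasurable_funM | by move=> w; apply: mule_ge0 => //; rewrite lee_fin; exact: ZE |].
    rewrite BR //.
    rewrite (eq_integral (fun w => (Z w 0)%:E * F (Z w))); last first.
      by move=> w _; rewrite siF.
    apply/int0 => //; [exact: emeasurable_funM | by move=> w; apply: mule_ge0 => //; rewrite lee_fin; exact: ZE].
  have mS : measurable [set w | exists t, (0 < Z w t)%R].
    have -> : [set w | exists t, (0 < Z w t)%R] = \bigcup_t [set w | (0 < Z w t)%R].
      by apply/seteqP; split=> w /= [t]; [exists t|move=> _; exists t].
    rewrite (@bigcup_pickle _ (0%R : 'rV[int]_d)); apply: bigcupT_measurable => n.
    have := mZr (odflt 0%R (unpickle n)) measurableT _ (@measurable_itv R `]0%R, +oo[%R).
    rewrite setTI; congr measurable; apply/seteqP; split=> w /=; rewrite in_itv /= andbT //.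
  have NS : P.-negligible (~` [set w | exists t, (0 < Z w t)%R]).
    apply/negligibleP; first exact: measurableC.
    have H0 := probability_setC P mS.
    rewrite PS in H0.
    by rewrite subee in H0.
  apply: negligibleS (negligibleU (negl_bigcup_count 0%R Nh) NS).
  move=> w /= Fne0.
  case: (pselect (exists t, (0 < Z w t)%R)) => [[t Zt]|nS]; [left; exists t => //| by right].
  by rewrite /= mule_eq0 negb_or Fne0 andbT eqe gt_eqF.
transitivity (P.-negligible [set w | (Z w 0)%:E * (\1_A (Z w))%:E != 0]).
  suff -> : [set w | (Z w 0)%:E * F (Z w) != 0] = [set w | (Z w 0)%:E * (\1_A (Z w))%:E != 0] by [].
  apply/seteqP; split=> w /=; rewrite !mule_eq0 !negb_or indicE => /andP[-> /=];
    case: (boolP (Z w \in A)) => [/set_mem [_ /= H]|/negP H] //=.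
  - by move=> Fz; exfalso; apply: H; apply/mem_set; split; [exact: ZE| exact/eqP].
  - by move=> _; apply/eqP.
  - by rewrite eqxx.
have mInd : measurable_fun [set: Om] (fun w => (Z w 0)%:E * (\1_A (Z w))%:E).
  apply: emeasurable_funM => //; apply/measurable_EFinP.
  exact: (measurableT_comp (measurable_indic mA) mZ).
rewrite -(int0 P mInd); last first.
  by move=> w; apply: mule_ge0; rewrite lee_fin ?indicE ?ler0n //; exact: ZE.
have -> : \int[P]_w ((Z w 0)%:E * (\1_A (Z w))%:E) = P' (Theta @^-1` A).
  rewrite hT //; apply: eq_integral => w _.
  case: (eqVneq (Z w 0%R) 0%R) => [->|nz]; first by rewrite !mul0e.
  have Zp : (0 < Z w 0)%R by rewrite lt_neqAle eq_sym nz; exact: ZE.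
  have FZn : F ((fun t => (Z w t / Z w 0)%R) : RF R d) = F (Z w).
    rewrite -(hF (Z w 0%R)^-1%R (Z w) _ (ZE w)); last by rewrite invr_gt0.
    by congr F; apply/funext => t; rewrite mulrC.
  congr (_ * _%:E); rewrite !indicE; congr (_%:R).
  congr (nat_of_bool _).
  apply/idP/idP => /set_mem [_ /= H]; apply/mem_set; split => //=.
  - by move=> t; apply: divr_ge0 => //; exact: ZE.
  - by rewrite FZn.
  - by rewrite -FZn.
have -> : [set w | F (Theta w) != 0] = Theta @^-1` A.
  apply/seteqP; split=> w /=.
    by move=> /eqP H; split => //; exact: TE.
  by move=> [_ /= /eqP].
rewrite negligibleP //.
by have := mT measurableT _ mA; rewrite setTI.
Qed.

Lemma ex1 (R : realType) (x y : \bar R) : x + y = 1 -> 0 <= x -> 0 <= y -> (x = 1 <-> y = 0).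
Proof.
case: x => [x||] //; case: y => [y||] //=.
move=> [] H x0 y0. rewrite !lee_fin in x0 y0. split=> [[] Hx|[] Hy]; congr EFin; lra.
Qed.

Lemma sum1 (R : realType) (d : nat) dO (Om : measurableType dO) (Q : probability Om R)
  (X : Om -> RF R d) (F : RF R d -> \bar R) :
  measurable_fun [set: Om] X -> (forall w, Eset (X w)) ->
  measurable_fun (@Eset R d) F -> nonneg_map F ->
  (forall f, Eset f -> F f <= 1) ->
  \int[Q]_w F (X w) + \int[Q]_w (1 - F (X w)) = 1.
Proof.
move=> mX XE mF F0 F1.
have mG : measurable_fun (@Eset R d) (fun f => 1 - F f).
  exact: (emeasurable_funB (measurable_cst _) mF).
rewrite -ge0_integralD //; last 4 first.
- by move=> w _; exact: F0 (XE w).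
- exact: comp_E mX XE mF.
- by move=> w _; rewrite sube_ge0 ?F1 ?XE ?orbT.
- exact: (comp_E mX XE mG).
rewrite (eq_integral (cst 1)); last first.
  move=> w _; rewrite addeC subeK // ge0_fin_numE ?F0 //.
  by apply: (le_lt_trans (F1 _ (XE w))); rewrite ltey.
rewrite integral_cst //.
exact: (etrans (congr1 (fun x => 1 * x) (probability_setT Q)) (mul1e 1)).
Qed.

Arguments sum1 {R d dO Om} Q {X F}.
Arguments ex1 {R x y}.

Theorem lemmaA2 (R : realType) (d : nat)
  (dO : measure_display) (Om : measurableType dO) (P : probability Om R)
  (Z : Om -> RF R d)
  (dO' : measure_display) (Om' : measurableType dO') (P' : probability Om' R)
  (Theta : Om' -> RF R d) :
  BRs P Z ->
  P [set w | exists t, (0 < Z w t)%R] = 1%E ->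
  (forall t, \int[P]_w (Z w t)%:E = 1%E) ->
  measurable_fun [set: Om'] Theta ->
  (forall w, Eset (Theta w)) ->
  (forall A : set (RF R d), measurable A ->
     P' (Theta @^-1` A)
     = \int[P]_w ((Z w 0)%:E
                  * (\1_A ((fun t => (Z w t / Z w 0)%R) : RF R d))%:E)%E) ->
  forall F : RF R d -> \bar R,
    measurable_fun (@Eset R d) F -> nonneg_map F -> shift_inv F -> hom0 F ->
    (\int[P]_w F (Z w) = 0%E <-> \int[P']_w F (Theta w) = 0%E) /\
    ((forall f, Eset f -> (F f <= 1)%E) ->
     (\int[P]_w F (Z w) = 1%E <-> \int[P']_w F (Theta w) = 1%E)).
Proof.
move=> BR PS _ mT TE hT F mF F0 siF hF.
split; first exact: (@part1 _ _ _ _ _ _ _ _ _ _ BR PS mT TE hT F mF F0 siF hF).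
move=> F1.
pose G := fun f : RF R d => 1 - F f.
have mG : measurable_fun (@Eset R d) G.
  exact: (emeasurable_funB (measurable_cst _) mF).
have G0 : nonneg_map G.
  by move=> f Ef; rewrite /G sube_ge0 ?F1 ?orbT.
have siG : shift_inv G by move=> h f Ef; rewrite /G siF.
have hG : hom0 G by move=> c f c0 Ef; rewrite /G hF.
have [mZ ZE _ _] := BR.
have HZ := sum1 P mZ ZE mF F0 F1.
have HT := sum1 P' mT TE mF F0 F1.
rewrite (ex1 HZ); last 2 first.
- by apply: integral_ge0 => w _; exact: F0.
- by apply: integral_ge0 => w _; exact: G0.
rewrite (ex1 HT); last 2 first.
- by apply: integral_ge0 => w _; exact: F0.
- by apply: integral_ge0 => w _; exact: G0.
exact: (@part1 _ _ _ _ _ _ _ _ _ _ BR PS mT TE hT G mG G0 siG hG).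
Qed.
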